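(* Let $\mathcal X$ be a nonsingular plane curve of degree $r+1$ and genus $g$ over $\mathbf F_q$ with at least one $\mathbf F_q$-rational point. Let $N$ be an integer with $0\le N\le 2g-2$. Write $\lfloor N/2\rfloor=\alpha r+\beta$ with $0\le\beta<r$, and assume $\alpha\ge1$. (1) If $\lfloor N/2\rfloor$ is a gap of $\mathcal X$, then $R(N)=\min\{\tilde\ell(\lfloor N/2\rfloor)+\tilde\ell(\lceil N/2\rceil),\ \tilde\ell(\alpha r-1)+\tilde\ell(N-\alpha r+1)\}$. (2) If $\lfloor N/2\rfloor\in GS(\mathcal X)$, then $R(N)=\tilde\ell(\alpha r-1)+\tilde\ell(N-\alpha r+1)$.
   Context: $\ell(A)=\dim_{\mathbf F_q}\mathcal L(A)$. For $i\ge1$, $\gamma_i=\min\{\deg A: A\ \mathbf F_q\text{-rational divisor},\ \ell(A)\ge i\}$, and $GS(\mathcal X)=\{\gamma_i:i\ge1\}$. For such a plane curve it is known that $GS(\mathcal X)$ is the numerical semigroup generated by $r$ and $r+1$, and that $g=r(r-1)/2$. Let $\mathbf N'=\{-1,0,1,\dots\}$; a gap is an element of $\mathbf N'\setminus GS(\mathcal X)$. Define $\tilde\ell(-1)=0$ and $\tilde\ell(b)=\max\{i\ge1:\gamma_i\le b\}$ for $b\ge0$. For $-1\le M\le 2g-2$, let $R(M)=\min\{\tilde\ell(a)+\tilde\ell(b):a,b\in\mathbf N',\ a+b=M\}$. *)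

(* Defs.v *)
(* Combinatorial model of the Weierstrass-type semigroup
   GS(X) = <r, r+1> of a nonsingular plane curve of degree r+1. *)
From mathcomp Require Import all_boot all_algebra.
Set Implicit Arguments. Unset Strict Implicit. Unset Printing Implicit Defensive.
Import GRing.Theory Num.Theory.

Definition inGS (r k : nat) : bool :=
  [exists a : 'I_k.+1, exists b : 'I_k.+1, (a * r + b * r.+1 == k)%N].

(* membership in GS(X) for an element of N' = {-1,0,1,...} (as an int) *)
Definition inGSz (r : nat) (n : int) : bool :=
  match n with Posz k => inGS r k | Negz _ => false end.

Definition gap (r : nat) (n : int) : bool :=
  ((-1 <= n)%R) && ~~ inGSz r n.

(* ltilde(b) = max{i >= 1 : gamma_i <= b} = #{ s in GS(X) : 0 <= s <= b }
   (gamma_1 < gamma_2 < ... is the increasing enumeration of GS(X));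
   ltilde(-1) = 0 (empty sum). *)
Definition ltilde (r : nat) (b : int) : nat :=
  \sum_(0 <= k < absz (b + 1)%R) nat_of_bool (inGS r k).

(* R(M) = min { ltilde a + ltilde b : a, b in N', a + b = M };
   a ranges over -1 .. M+1 via a = i - 1, i = 0 .. M+2. *)
Definition Rfun (r : nat) (M : int) : nat :=
  \big[minn / (ltilde r (-1) + ltilde r (M + 1))]_(0 <= i < absz (M + 3)%R)
     (ltilde r (i%:Z - 1) + ltilde r (M - (i%:Z - 1))).

(* Main.v *)
Require Import Defs.
From mathcomp Require Import all_boot all_algebra.
From mathcomp Require Import zify.
Import GRing.Theory Num.Theory.

Section Aux.
Variable r : nat.

Definition cnt (k : nat) : nat := \sum_(0 <= j < k) nat_of_bool (inGS r j).

Lemma cntS k : cnt k.+1 = cnt k + inGS r k.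
Proof. by rewrite /cnt big_nat_recr. Qed.

Lemma cnt_le1 k : cnt k.+1 <= (cnt k).+1.
Proof. rewrite cntS; case: (inGS r k) => /=; lia. Qed.

Lemma cnt_mono k : cnt k <= cnt k.+1.
Proof. rewrite cntS; lia. Qed.

Lemma cnt_monoL a b : a <= b -> cnt a <= cnt b.
Proof.
move=> ab; rewrite -(subnKC ab); elim: (b - a) => [|d IH]; first by rewrite addn0.
by rewrite addnS (leq_trans IH (cnt_mono _)).
Qed.

Lemma memS x t : 0 < r -> t <= x -> inGS r (x * r + t).
Proof.
move=> r0 tx; apply/existsP.
have h1 : x - t < (x * r + t).+1.
  have : x <= x * r by rewrite leq_pmulr.
  lia.
have h2 : t < (x * r + t).+1 by lia.
exists (Ordinal h1); apply/existsP; exists (Ordinal h2) => /=.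
apply/eqP.
have -> : x * r = (x - t) * r + t * r.
  by rewrite -mulnDl subnK.
rewrite mulnS; lia.
Qed.

Lemma gapS x t : x < t -> t < r -> ~~ inGS r (x * r + t).
Proof.
move=> xt tr; apply/negP => /existsP [[a ha] /existsP [[b hb'] /eqP /= E]].
have E' : (a + b) * r + b = x * r + t by rewrite -E mulnS; nia.
have hm : b %% r = t.
  by have := congr1 (modn^~ r) E'; rewrite /= modnMDl modnMDl (modn_small tr).
have hb : t <= b by rewrite -hm leq_mod.
have : t * r.+1 <= b * r.+1 by rewrite leq_mul2r hb orbT.
have : (b * r.+1 <= x * r + t) by rewrite -E leq_addl.
have : x.+1 * r <= t * r by rewrite leq_mul2r xt orbT.
rewrite !mulnS !mulSn; lia.
Qed.

Lemma shiftS n : inGS r n -> inGS r (n + r).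
Proof.
case: (posnP r) => [->|rp]; first by rewrite addn0.
move=> /existsP [[a ha] /existsP [[b hb] /eqP /= E]]; apply/existsP.
have h1 : a.+1 < (n + r).+1 by lia.
have h2 : b < (n + r).+1 by lia.
exists (Ordinal h1); apply/existsP; exists (Ordinal h2) => /=.
by rewrite mulSn -E; apply/eqP; lia.
Qed.

Variable K : nat.
Definition G (i : nat) := cnt i + cnt (K - i).

Lemma down i : i < K -> inGS r i -> G i <= G i.+1.
Proof.
move=> iK hi; rewrite /G cntS hi.
have -> : K - i = (K - i.+1).+1 by lia.
have := cnt_le1 (K - i.+1); lia.
Qed.

Lemma up i : i < K -> ~~ inGS r i -> G i.+1 <= G i.
Proof.
move=> iK hi; rewrite /G cntS (negbTE hi).
by rewrite addn0 leq_add2l; apply: cnt_monoL; lia.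
Qed.

Lemma Dmono c d : c <= d -> cnt (c + r) + cnt d <= cnt (d + r) + cnt c.
Proof.
move=> cd; rewrite -(subnKC cd); elim: (d - c) => [|e IH]; first by rewrite addn0.
rewrite addnS addSn !cntS.
have : inGS r (c + e) <= inGS r (c + e + r).
  by case H: (inGS r (c + e)) => //=; rewrite shiftS.
lia.
Qed.

Lemma down_run x t : 0 < r -> t <= x.+1 -> x * r + t <= K -> G (x * r) <= G (x * r + t).
Proof.
move=> r0; elim: t => [|t IH] ht hK; first by rewrite addn0.
apply: (leq_trans (IH ltac:(lia) ltac:(lia))).
rewrite addnS; apply: down; first lia.
by apply: memS.
Qed.

Lemma up_run x t d : x < t -> t + d <= r -> x * r + t + d <= K ->
  G (x * r + t + d) <= G (x * r + t).
Proof.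
move=> xt; elim: d => [|d IH] hd hK; first by rewrite addn0.
apply: leq_trans (IH ltac:(lia) ltac:(lia)).
rewrite addnS; apply: up; first lia.
rewrite -addnA; apply: gapS; lia.
Qed.

Lemma block_step x : x * r + r + x * r <= K -> G (x.+1 * r) <= G (x * r).
Proof.
move=> hK; have -> : x.+1 * r = x * r + r by rewrite mulSn addnC.
rewrite /G.
have := @Dmono (x * r) (K - (x * r + r)) ltac:(lia).
have -> : K - (x * r + r) + r = K - x * r by lia.
lia.
Qed.

Lemma block_chain x a : x <= a -> a * r + a * r <= K -> G (a * r) <= G (x * r).
Proof.
move=> xa; rewrite -(subnKC xa); elim: (a - x) => [|e IH] hK; first by rewrite addn0.
rewrite addnS in hK *.
have hx2 : (x + e).+1 * r = (x + e) * r + r by rewrite mulSn addnC.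
rewrite hx2 in hK.
have h1 := @block_step (x + e) ltac:(lia).
have h2 := IH ltac:(lia).
exact: leq_trans h1 h2.
Qed.
End Aux.

Lemma Gsym r K i : i <= K -> G r K i = G r K (K - i).
Proof. by move=> iK; rewrite /G subKn // addnC. Qed.

Lemma BS r K al be y : 0 < r -> be < r -> (al * r + be).+1 * 2 <= K ->
  y * r <= (al * r + be).+1 ->
  minn (G r K (al * r + be).+1) (G r K (al * r)) <= G r K (y * r).
Proof.
move=> r0 br hK hy.
case: (leqP y al) => hya.
  apply: leq_trans (geq_minr _ _) _; apply: block_chain => //; lia.
have : al.+1 * r <= y * r by rewrite leq_mul2r hya orbT.
rewrite mulSn => h1.
have -> : y * r = (al * r + be).+1 by lia.
exact: geq_minl.
Qed.

Lemma key r K al be i : 0 < r -> be < r -> (al * r + be).+1 * 2 <= K ->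
  i <= (al * r + be).+1 ->
  minn (G r K (al * r + be).+1) (G r K (al * r)) <= G r K i.
Proof.
move=> r0 br hK hi.
set x := i %/ r; set t := i %% r.
have hit : i = x * r + t by rewrite /x /t -divn_eq.
have tr : t < r by rewrite /t ltn_pmod.
case: (leqP t x.+1) => htx.
  apply: leq_trans (@BS r K al be x r0 br hK _) _; first by lia.
  rewrite hit; apply: down_run => //; lia.
case: (leqP (x * r + r) (al * r + be).+1) => hb.
  apply: leq_trans (@BS r K al be x.+1 r0 br hK _) _; first by rewrite mulSn; lia.
  have := @up_run r K x t (r - t) ltac:(lia) ltac:(lia) ltac:(lia).
  have -> : x * r + t + (r - t) = x.+1 * r by rewrite mulSn; lia.
  by rewrite -hit.
apply: leq_trans (geq_minl _ _) _.
have := @up_run r K x t ((al * r + be).+1 - (x * r + t)) ltac:(lia) ltac:(lia) ltac:(lia).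
have -> : x * r + t + ((al * r + be).+1 - (x * r + t)) = (al * r + be).+1 by lia.
by rewrite -hit.
Qed.

Lemma bigmin_le_seq (x0 : nat) (F : nat -> nat) (s : seq nat) j : j \in s ->
  \big[minn/x0]_(i <- s) F i <= F j.
Proof.
elim: s => [//|a s IH]; rewrite inE big_cons => /orP [/eqP ->|hj].
  exact: geq_minl.
exact: leq_trans (geq_minr _ _) (IH hj).
Qed.

Lemma bigmin_le (x0 : nat) (F : nat -> nat) n j : j < n ->
  \big[minn/x0]_(0 <= i < n) F i <= F j.
Proof. by move=> hj; apply: bigmin_le_seq; rewrite mem_index_iota. Qed.

Lemma bigmin_ge (x0 : nat) (F : nat -> nat) n m : m <= x0 ->
  (forall i, i < n -> m <= F i) -> m <= \big[minn/x0]_(0 <= i < n) F i.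
Proof.
move=> h0 hF; rewrite big_seq; apply: (big_ind (fun v => m <= v)) => //.
  by move=> u v hu hv; rewrite leq_min hu hv.
by move=> i; rewrite mem_index_iota => /andP [_ hi]; apply: hF.
Qed.

Lemma ltilde_cnt r (b : int) k : (b + 1)%R = Posz k -> ltilde r b = cnt r k.
Proof. by move=> h; rewrite /ltilde h. Qed.

Lemma Rfun_G r N : Rfun r N%:Z%R =
  \big[minn/G r N.+2 0]_(0 <= i < N.+3) G r N.+2 i.
Proof.
rewrite /Rfun.
have -> : (N%:Z%R + 3)%R = (N.+3)%:Z%R by lia.
rewrite (@ltilde_cnt r (-1) 0); last by lia.
rewrite (@ltilde_cnt r (N%:Z%R + 1) (N.+2 - 0)); last by lia.
apply: eq_big_nat => i /andP [_ hi].
rewrite (@ltilde_cnt r _ i); last by lia.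
rewrite (@ltilde_cnt r _ (N.+2 - i)) //; lia.
Qed.
Theorem proposition3p15 (r g N alpha beta : nat) :
  g = (r * (r - 1))./2 ->
  (N%:Z <= 2 * g%:Z - 2)%R ->
  N./2 = (alpha * r + beta)%N ->
  (beta < r)%N ->
  (1 <= alpha)%N ->
  (gap r (N./2)%:Z ->
     Rfun r N%:Z =
     minn (ltilde r (N./2)%:Z + ltilde r (N - N./2)%:Z)
          (ltilde r ((alpha * r)%:Z - 1) + ltilde r (N%:Z - (alpha * r)%:Z + 1)))
  /\
  (inGSz r (N./2)%:Z ->
     Rfun r N%:Z =
     (ltilde r ((alpha * r)%:Z - 1) + ltilde r (N%:Z - (alpha * r)%:Z + 1))%N).

Proof.
move=> hg hN hh hb ha.
have r0 : 0 < r by lia.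
have hN2 : N./2 * 2 <= N.
  by rewrite -[leqRHS](odd_double_half N) -muln2 leq_addl.
rewrite hh in hN2 *.
set H := (alpha * r + beta).+1.
have hK : H * 2 <= N.+2 by rewrite /H; lia.
have ar : alpha * r <= H by rewrite /H; lia.
rewrite Rfun_G.
rewrite (@ltilde_cnt r (Posz (alpha * r + beta)) H); last by rewrite /H; lia.
rewrite (@ltilde_cnt r (Posz (N - (alpha * r + beta))) (N.+2 - H)); last by rewrite /H; lia.
rewrite (@ltilde_cnt r ((alpha * r)%:Z - 1)%R (alpha * r)); last by lia.
rewrite (@ltilde_cnt r (N%:Z - (alpha * r)%:Z + 1)%R (N.+2 - alpha * r)); last by lia.
rewrite -/(G r N.+2 H) -/(G r N.+2 (alpha * r)).
have Hmin : \big[minn/G r N.+2 0]_(0 <= i < N.+3) G r N.+2 i =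
            minn (G r N.+2 H) (G r N.+2 (alpha * r)).
  apply/eqP; rewrite eqn_leq; apply/andP; split.
    rewrite leq_min !bigmin_le //; lia.
  have hall : forall i, i <= N.+2 -> minn (G r N.+2 H) (G r N.+2 (alpha * r)) <= G r N.+2 i.
    move=> i hi; case: (leqP i H) => hiH; first exact: key.
    rewrite (@Gsym r N.+2 i hi); apply: key => //; rewrite -/H; lia.
  apply: bigmin_ge; first exact: hall.
  by move=> i hi; apply: hall.
rewrite Hmin; split => // hS.
have hba : beta <= alpha.
  case: (leqP beta alpha) => // hlt.
  by move: hS; rewrite /= (negbTE (@gapS r alpha beta hlt hb)).
have : G r N.+2 (alpha * r) <= G r N.+2 (alpha * r + beta.+1).
  apply: down_run => //; lia.
rewrite addnS -/H => hle.
by apply/minn_idPr.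
Qed.
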